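(* Let $q\ge1$ and let $\mathcal{T}_q=(\tau_1,\ldots,\tau_q)$ be the permutation ideal in $S_{\mathcal{T}}=K[x_\sigma:\sigma\in S_q]$. Consider the simplicial complex $\mathbb{M}_q^2$ with vertex set $\{\tau_i\tau_j:1\le i\le j\le q\}$, $\mathcal{M}=\{\tau_i\tau_j:1\le i<j\le q\}$, facets $\mathcal{M}_k=\mathcal{M}\cup\{\tau_k^2\}$ ($k\in[q]$), and for a set $A$ of vertices let $m_A$ be the lcm of its elements. Then: (i) $m_{\mathcal{M}}=\prod_{\sigma\in S_q}x_\sigma^{2q-1}$; (ii) for a face $\gamma\in\mathbb{M}_q^2$ and $\sigma\in S_q$: $x_\sigma^{2q}\mid m_\gamma$ if and only if $\tau_i^2\in\gamma$ for some $i\in[q]$ with $\sigma(i)=q$; (iii) for a face $\gamma\in\mathbb{M}_q^2$ and $\sigma\in S_q$ with $\sigma(i)=q$ and $\sigma(j)=q-1$: if $\tau_i^2\notin\gamma$, then $x_\sigma^{2q-1}\mid m_\gamma$ if and only if $\tau_i\tau_j\in\gamma$; (iv) for every $k\in[q]$, $m_{\mathcal{M}_k}=\prod_{\sigma\in S_q,\ \sigma(k)=q}x_\sigma^{2q}\prod_{\sigma\in S_q,\ \sigma(k)\neq q}x_\sigma^{2q-1}$; (v) $m_{V(\mathbb{M}_q^2)}=\prod_{\sigma\in S_q}x_\sigma^{2q}$, where $V(\mathbb{M}_q^2)$ is the vertex set.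
   Context: $S_q$ is the symmetric group on $[q]$; for $\sigma=i_1\cdots i_q$ in one-line notation, $\sigma(j)=i_j$. $K$ is a field, $\tau_i=\prod_{\sigma\in S_q}x_\sigma^{\sigma(i)}$, and $\mathcal{T}_q=(\tau_1,\ldots,\tau_q)$. The monomials $\tau_i\tau_j$ ($1\le i\le j\le q$) are pairwise distinct, so they can serve as vertex names. *)

(* Defs.v *)
(* Monomials in the variables x_sigma (sigma in S_q) are
   represented by their exponent vectors {ffun 'S_q -> nat}. *)
From mathcomp Require Import all_boot all_fingroup.
Set Implicit Arguments. Unset Strict Implicit. Unset Printing Implicit Defensive.

Section Monomials.
Variable q : nat.

Definition mon := {ffun 'S_q -> nat}.
Definition mone : mon := [ffun _ => 0].
Definition mmul (a b : mon) : mon := [ffun s => a s + b s].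
Definition mvarpow (s : 'S_q) (e : nat) : mon :=
  [ffun t => if t == s then e else 0].
Definition mlcm (a b : mon) : mon := [ffun s => maxn (a s) (b s)].
Definition mdvd (a b : mon) : bool := [forall s, a s <= b s].

(* [q] = {1,...,q} is encoded by 'I_q = {0,...,q-1}; val1b s i is the
   1-based value sigma(i) of the permutation. *)
Definition val1b (s : 'S_q) (i : 'I_q) : nat := (s i).+1.

Definition tau (i : 'I_q) : mon := \big[mmul/mone]_(s : 'S_q) mvarpow s (val1b s i).

(* vertices tau_i tau_j (i <= j) are named by the pair (i, j) with i <= j *)
Definition vmon (p : 'I_q * 'I_q) : mon := mmul (tau p.1) (tau p.2).
Definition vtx (i j : 'I_q) : 'I_q * 'I_q := if i <= j then (i, j) else (j, i).

Definition Vset : {set 'I_q * 'I_q} := [set p : 'I_q * 'I_q | p.1 <= p.2].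
Definition Mset : {set 'I_q * 'I_q} := [set p : 'I_q * 'I_q | p.1 < p.2].
Definition Mk (k : 'I_q) : {set 'I_q * 'I_q} := Mset :|: [set (k, k)].
Definition face (g : {set 'I_q * 'I_q}) : Prop := exists k, g \subset Mk k.

Definition lcmA (A : {set 'I_q * 'I_q}) : mon := \big[mlcm/mone]_(p in A) vmon p.

End Monomials.

(* Main.v *)
Require Import Defs.
From mathcomp Require Import all_boot all_fingroup.
From mathcomp Require Import zify.

Section Aux.
Variable q : nat.

Lemma bigmmulE (P : pred 'S_q) (F : 'S_q -> mon q) s :
  (\big[@mmul q/mone q]_(t | P t) F t) s = \sum_(t | P t) F t s.
Proof.
apply: (big_morph (fun m : mon q => m s) (id1 := 0) (op1 := addn)).
  by move=> a b; rewrite ffunE.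
by rewrite ffunE.
Qed.

Lemma sum_varpow (P : pred 'S_q) (e : 'S_q -> nat) s :
  (\big[@mmul q/mone q]_(t | P t) mvarpow t (e t)) s = if P s then e s else 0.
Proof.
rewrite bigmmulE; case: (boolP (P s)) => Ps.
  rewrite (bigD1 s) //= ffunE eqxx big1 ?addn0 // => t /andP[_ ts].
  by rewrite ffunE eq_sym (negbTE ts).
rewrite big1 // => t Pt; rewrite ffunE; case: eqP => // E.
by subst; rewrite Pt in Ps.
Qed.

Lemma sum_varpowT (e : 'S_q -> nat) s :
  (\big[@mmul q/mone q]_(t : 'S_q) mvarpow t (e t)) s = e s.
Proof. exact: (sum_varpow xpredT). Qed.

Lemma tauE (i : 'I_q) s : tau i s = (s i).+1.
Proof. by rewrite /tau sum_varpowT. Qed.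

Definition F (s : 'S_q) (p : 'I_q * 'I_q) := (s p.1).+1 + (s p.2).+1.

Lemma lcmE (A : {set 'I_q * 'I_q}) s : lcmA A s = \max_(p in A) F s p.
Proof.
rewrite /lcmA (big_morph (fun m : mon q => m s) (id1 := 0) (op1 := maxn)).
- by apply: eq_bigr => p _; rewrite /vmon ffunE !tauE.
- by move=> a b; rewrite ffunE.
- by rewrite ffunE.
Qed.

Lemma mdvdE s e (m : mon q) : mdvd (mvarpow s e) m = (e <= m s).
Proof.
apply/forallP/idP => [/(_ s)|h t]; first by rewrite ffunE eqxx.
by rewrite ffunE; case: eqP => [->|].
Qed.

Lemma bigmax_geq (A : {set 'I_q * 'I_q}) (G : 'I_q * 'I_q -> nat) m :
  0 < m -> m <= \max_(p in A) G p -> exists2 p, p \in A & m <= G p.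
Proof.
move=> m0 h; have [/exists_inP[p pA hp]|H] := boolP [exists p in A, m <= G p].
  by exists p.
exfalso; have : \max_(p in A) G p <= m.-1.
  apply/bigmax_leqP => p pA; rewrite -ltnS prednK // ltnNge.
  apply/negP => hp; move/negP: H; apply; apply/exists_inP; by exists p.
by move=> /(leq_trans h); rewrite leqNgt ltn_predL m0.
Qed.

Lemma sinj (s : 'S_q) x y : (s x : nat) = s y -> x = y.
Proof. by move=> /val_inj /perm_inj. Qed.

Lemma Fle s (p : 'I_q * 'I_q) : F s p <= 2 * q.
Proof. rewrite /F; have := ltn_ord (s p.1); have := ltn_ord (s p.2); lia. Qed.

Lemma M_upper s (p : 'I_q * 'I_q) : p.1 < p.2 -> F s p <= 2 * q - 1.
Proof.
move=> hp; have ne : (s p.1 : nat) <> s p.2.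
  by move=> /sinj E; rewrite E ltnn in hp.
rewrite /F; have := ltn_ord (s p.1); have := ltn_ord (s p.2); lia.
Qed.

Lemma preim (s : 'S_q) (n : nat) (h : n < q) : exists i : 'I_q, (s i : nat) = n.
Proof. exists ((s^-1)%g (Ordinal h)); by rewrite permKV. Qed.

Lemma M_wit s : 1 < q -> exists2 p, p \in Mset q & 2 * q - 1 <= F s p.
Proof.
move=> q1; have h1 : q - 1 < q by lia.
have h2 : q - 2 < q by lia.
have [a ha] := @preim s _ h1; have [b hb] := @preim s _ h2.
case: (ltngtP a b) => h.
- by exists (a, b); [rewrite inE | rewrite /F /= ha hb; lia].
- by exists (b, a); [rewrite inE | rewrite /F /= ha hb; lia].
- have E : a = b by apply: val_inj.
  by move: ha hb; rewrite E => ->; lia.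
Qed.

End Aux.

Theorem lemma4p6 (q : nat) (hq : 0 < q) :
  [/\ (* (i) (needs q >= 2: for q = 1, M is empty and m_M = 1) *)
      (1 < q -> lcmA (Mset q) = \big[@mmul q/mone q]_(s : 'S_q) mvarpow s (2 * q - 1)),
      (* (ii) *)
      (forall (g : {set 'I_q * 'I_q}), face g -> forall s : 'S_q,
         mdvd (mvarpow s (2 * q)) (lcmA g) <->
         exists i : 'I_q, val1b s i = q /\ (i, i) \in g),
      (* (iii) *)
      (forall (g : {set 'I_q * 'I_q}), face g -> forall (s : 'S_q) (i j : 'I_q),
         val1b s i = q -> val1b s j = q - 1 -> (i, i) \notin g ->
         (mdvd (mvarpow s (2 * q - 1)) (lcmA g) <-> vtx i j \in g)),
      (* (iv) *)
      (forall k : 'I_q,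
         lcmA (Mk k) =
         mmul (\big[@mmul q/mone q]_(s : 'S_q | val1b s k == q) mvarpow s (2 * q))
              (\big[@mmul q/mone q]_(s : 'S_q | val1b s k != q) mvarpow s (2 * q - 1)))
    & (* (v) *)
      lcmA (Vset q) = \big[@mmul q/mone q]_(s : 'S_q) mvarpow s (2 * q)].
Proof.
split.
- move=> q1; apply/ffunP => s; rewrite lcmE sum_varpowT.
  apply/eqP; rewrite eqn_leq; apply/andP; split.
    by apply/bigmax_leqP => p; rewrite inE => /(@M_upper q s _).
  by have [p pM hp] := @M_wit q s q1; apply: (bigmax_sup p).
- move=> g _ s; rewrite mdvdE lcmE; split.
    move=> /bigmax_geq []; first lia.
    move=> [a b] pg; rewrite /F /= => h.
    have := ltn_ord (s a); have := ltn_ord (s b) => hb ha.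
    have E : a = b by apply: (@sinj _ s); lia.
    subst b; exists a; split; last by [].
    rewrite /val1b; lia.
  move=> [i [hi ig]]; apply: (bigmax_sup (i, i)) => //.
  by rewrite /F /=; move: hi; rewrite /val1b; lia.
- move=> g [k gk] s i j hi hj iig; rewrite mdvdE lcmE; move: hi hj; rewrite /val1b => hi hj.
  split.
    move=> /bigmax_geq []; first lia.
    move=> [a b] pg; rewrite /F /= => h.
    have := ltn_ord (s a); have := ltn_ord (s b) => hb ha.
    move: (subsetP gk _ pg); rewrite !inE /= => /orP[ab|/eqP[ea eb]].
      have ne : (s a : nat) <> s b by move=> /sinj E; rewrite E ltnn in ab.
      have [[e1 e2]|[e1 e2]] : ((s a : nat) = s i /\ (s b : nat) = s j) \/
                          ((s a : nat) = s j /\ (s b : nat) = s i) by lia.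
        move/sinj: e1 => e1; move/sinj: e2 => e2; subst a b.
        by rewrite /vtx leq_eqVlt ab orbT.
      move/sinj: e1 => e1; move/sinj: e2 => e2; subst a b.
      by rewrite /vtx leqNgt ab.
    subst a b; exfalso.
    have E : k = i by apply: (@sinj _ s); lia.
    by subst k; rewrite pg in iig.
  move=> hv; apply: (bigmax_sup (vtx i j)) => //.
  by rewrite /vtx; case: (leqP i j) => _; rewrite /F /=; lia.
- move=> k; apply/ffunP => s; rewrite lcmE ffunE !sum_varpow /val1b.
  have := ltn_ord (s k) => hk.
  have kin : (k, k) \in Mk k by rewrite !inE eqxx orbT.
  case: eqP => e /=.
    apply/eqP; rewrite eqn_leq addn0; apply/andP; split.
      by apply/bigmax_leqP => p _; apply: Fle.
    by apply: (bigmax_sup (k, k)) => //; rewrite /F /=; lia.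
  apply/eqP; rewrite eqn_leq add0n; apply/andP; split.
    apply/bigmax_leqP => p; rewrite !inE => /orP[/(@M_upper q s _) //|/eqP ->].
    by rewrite /F /=; lia.
  have q1 : 1 < q by lia.
  have [p pM hp] := @M_wit q s q1; apply: (bigmax_sup p) => //.
  by rewrite /Mk inE pM.
- apply/ffunP => s; rewrite lcmE sum_varpowT.
  apply/eqP; rewrite eqn_leq; apply/andP; split.
    by apply/bigmax_leqP => p _; apply: Fle.
  have h1 : q - 1 < q by lia.
  have [a ha] := @preim q s _ h1.
  by apply: (bigmax_sup (a, a)); [rewrite inE | rewrite /F /= ha; lia].
Qed.
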